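(* Consider the two-user scalar fading multiple access channel and the low-level game described in the context. For every measurable set $D_1\subseteq(0,\infty)^2$ (the base-station strategy) and every fading distribution satisfying the standing assumptions, the low-level power allocation game induced by $D_1$ has a (pure-strategy) Nash equilibrium.
   Context: Channel: $y=\sqrt{h_1}x_1+\sqrt{h_2}x_2+z$, noise variance $\sigma^2>0$; the fading $\mathbf h=(h_1,h_2)$ is stationary ergodic with a stationary distribution on $(0,\infty)^2$ having a continuous bounded density $f$; channel state is known to all transmitters and the receiver. User $i$ has average power budget $\bar P_i>0$; its feasible set is $\mathcal F_i=\{\mathcal P_i:(0,\infty)^2\to[0,\infty)\ \text{measurable}: E[\mathcal P_i(\mathbf h)]\le\bar P_i\}$. The base station uses successive decoding: for states $(h_1,h_2)\in D_1$ it decodes user 1 first, for states in $D_1^c$ it decodes user 2 first. Given $D_1$, the low-level game has the two users as players with strategy sets $\mathcal F_1,\mathcal F_2$ and payoffs $\bar R_1(D_1,\mathcal P_1,\mathcal P_2)=\iint\tfrac12\log_2\Big(1+\frac{\mathcal P_1(h_1,h_2)h_1}{\sigma^2+\mathcal P_2(h_1,h_2)h_2\,I_{\{(h_1,h_2)\in D_1\}}}\Big)f(h_1,h_2)\,dh_1dh_2$, $\bar R_2(D_1,\mathcal P_1,\mathcal P_2)=\iint\tfrac12\log_2\Big(1+\frac{\mathcal P_2(h_1,h_2)h_2}{\sigma^2+\mathcal P_1(h_1,h_2)h_1\,I_{\{(h_1,h_2)\in D_1^c\}}}\Big)f(h_1,h_2)\,dh_1dh_2$, where $I$ is the indicator function.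 A Nash equilibrium is a pair $(\mathcal P_1^*,\mathcal P_2^* )$ such that neither user can increase its own payoff by unilaterally changing its policy within its feasible set. *)

(* Defs.v *)
From HB Require Import structures.
From mathcomp Require Import all_boot all_order all_algebra.
From mathcomp Require Import all_classical all_reals all_analysis.
Set Implicit Arguments. Unset Strict Implicit. Unset Printing Implicit Defensive.
Import Order.TTheory GRing.Theory Num.Theory numFieldNormedType.Exports.
Local Open Scope classical_set_scope.
Local Open Scope ring_scope.

Definition quadrant (R : realType) : set (R * R) :=
  [set h | 0 < h.1 /\ 0 < h.2].
Arguments quadrant R : clear implicits.

Definition leb2 (R : realType) := (@lebesgue_measure R \x @lebesgue_measure R)%E.
Arguments leb2 R : clear implicits.

Definition log2 (R : realType) (x : R) : R := ln x / ln 2.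

Definition fading_density (R : realType) (f : R * R -> R) : Prop :=
  [/\ forall h, quadrant R h -> 0 <= f h,
      (\int[leb2 R]_(h in quadrant R) (f h)%:E = 1)%E,
      {within quadrant R, continuous f} &
      exists M : R, forall h, quadrant R h -> f h <= M].

Definition expect (R : realType) (f : R * R -> R) (P : R * R -> R) : \bar R :=
  (\int[leb2 R]_(h in quadrant R) (P h * f h)%:E)%E.

Definition feasible (R : realType) (f : R * R -> R) (Pbar : R)
    (P : R * R -> R) : Prop :=
  [/\ measurable_fun (quadrant R) P,
      forall h, quadrant R h -> 0 <= P h &
      (expect f P <= Pbar%:E)%E].

(* payoff of user 1 (decoded first on D1, so user 2 interferes there) *)
Definition rate1 (R : realType) (f : R * R -> R) (sigma2 : R)
    (D1 : set (R * R)) (P1 P2 : R * R -> R) : \bar R :=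
  (\int[leb2 R]_(h in quadrant R)
     ((2^-1 * log2 (1 + P1 h * h.1 / (sigma2 + P2 h * h.2 * \1_D1 h))) * f h)%:E)%E.

(* payoff of user 2 (decoded first on the complement of D1) *)
Definition rate2 (R : realType) (f : R * R -> R) (sigma2 : R)
    (D1 : set (R * R)) (P1 P2 : R * R -> R) : \bar R :=
  (\int[leb2 R]_(h in quadrant R)
     ((2^-1 * log2 (1 + P2 h * h.2 / (sigma2 + P1 h * h.1 * \1_(~` D1) h))) * f h)%:E)%E.

Definition nash_equilibrium (R : realType) (f : R * R -> R) (sigma2 Pbar1 Pbar2 : R)
    (D1 : set (R * R)) (P1 P2 : R * R -> R) : Prop :=
  [/\ feasible f Pbar1 P1, feasible f Pbar2 P2,
      (forall P1', feasible f Pbar1 P1' ->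
         (rate1 f sigma2 D1 P1' P2 <= rate1 f sigma2 D1 P1 P2)%E) &
      (forall P2', feasible f Pbar2 P2' ->
         (rate2 f sigma2 D1 P1 P2' <= rate2 f sigma2 D1 P1 P2)%E)].

(* Main.v *)
Require Import Defs.
From HB Require Import structures.
From mathcomp Require Import all_boot all_order all_algebra.
From mathcomp Require Import all_classical all_reals all_analysis.
From mathcomp Require Import ring lra measurable_realfun.
Import Order.TTheory GRing.Theory Num.Theory numFieldNormedType.Exports.
Local Open Scope classical_set_scope.
Local Open Scope ring_scope.

Section s. Variable R : realType.


Definition box (q : (rat * rat) * (rat * rat)) : set (R * R) :=
  `](ratr q.1.1 : R), ratr q.1.2[ `*` `](ratr q.2.1 : R), ratr q.2.2[.

Lemma box_meas q : measurable (box q).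
Proof. apply: measurableX; exact: measurable_itv. Qed.

Lemma boxes_meas (U : set (R * R)) :
  (forall x, U x -> exists2 e : R, 0 < e &
     forall y, `|x.1 - y.1| < e -> `|x.2 - y.2| < e -> U y) ->
  measurable U.
Proof.
move=> HU.
have -> : U = \bigcup_q [set y | box q y /\ box q `<=` U].
  apply/seteqP; split; last by move=> y [q _ [? H]]; exact: H.
  move=> x Ux; have [e e0 He] := HU x Ux.
  have [a /[!in_itv]/= /andP[a1 a2]] := @rat_in_itvoo R (x.1 - e) x.1 ltac:(by rewrite ltrBlDr ltrDl).
  have [b /[!in_itv]/= /andP[b1 b2]] := @rat_in_itvoo R x.1 (x.1 + e) ltac:(by rewrite ltrDl).
  have [c /[!in_itv]/= /andP[c1 c2]] := @rat_in_itvoo R (x.2 - e) x.2 ltac:(by rewrite ltrBlDr ltrDl).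
  have [d /[!in_itv]/= /andP[d1 d2]] := @rat_in_itvoo R x.2 (x.2 + e) ltac:(by rewrite ltrDl).
  exists ((a, b), (c, d)) => //; split.
    by rewrite /box /= !in_itv /= a2 b1 c2 d1.
  move=> y; rewrite /box /= !in_itv /= => -[/andP[ya yb] /andP[yc yd]].
  apply: He; rewrite ltr_norml; apply/andP; split; lra.
apply: countable_bigcupT_measurable; first exact: countableP.
move=> q; have [H|H] := pselect (box q `<=` U).
  rewrite (_ : [set _ | _] = box q); first exact: box_meas.
  by apply/seteqP; split => y; [case|].
rewrite (_ : [set _ | _] = set0) //.
by apply/seteqP; split => y // [].
Qed.


Lemma quad_open : open (quadrant R).
Proof.
rewrite openE => x [x1 x2].
have m0 : 0 < Num.min x.1 x.2 :> R by rewrite lt_min x1 x2.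
apply/nbhs_ballP; exists (Num.min x.1 x.2 : R) => //.
move=> y [h1 h2]; move: h1 h2; rewrite /ball /= => h1 h2.
have e1 : Num.min x.1 x.2 <= x.1 :> R by rewrite ge_min lexx.
have e2 : Num.min x.1 x.2 <= x.2 :> R by rewrite ge_min lexx orbT.
move: (lt_le_trans h1 e1) (lt_le_trans h2 e2); rewrite !ltr_norml => /andP[? ?] /andP[? ?].
split; lra.
Qed.


Lemma cont_meas (f : R * R -> R) :
  {within quadrant R, continuous f} -> measurable_fun (quadrant R) f.
Proof.
rewrite continuous_open_subspace; last exact: quad_open.
move=> cf; apply: (measurability _ (measurable_realfun.RGenOpens.measurableE R)).
move=> _ [_ [a [b ->]] <-].
apply: boxes_meas => x [qx] /=; rewrite in_itv /= => /andP[ax xb].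
have m0 : 0 < Num.min (f x - a) (b - f x) :> R by rewrite lt_min !subr_gt0 ax xb.
have := cf x (mem_set qx); move/cvgrPdist_lt/(_ _ m0)/nbhs_ballP => -[e e0 He].
have q0 : 0 < Num.min x.1 x.2 :> R by move: qx => [? ?]; rewrite lt_min; apply/andP.
have em0 : 0 < Num.min e (Num.min x.1 x.2) :> R by rewrite lt_min e0 q0.
exists (Num.min e (Num.min x.1 x.2)) => // y h1 h2.
have e1 : Num.min e (Num.min x.1 x.2) <= x.1 :> R by rewrite !ge_min lexx orbT.
have e2 : Num.min e (Num.min x.1 x.2) <= x.2 :> R by rewrite !ge_min lexx !orbT.
have e3 : Num.min e (Num.min x.1 x.2) <= e :> R by rewrite !ge_min lexx.
have : ball x e y by split; rewrite /ball /=; exact: (lt_le_trans _ e3).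
move/He => /=.
have ea : Num.min (f x - a) (b - f x) <= f x - a :> R by rewrite ge_min lexx.
have eb : Num.min (f x - a) (b - f x) <= b - f x :> R by rewrite ge_min lexx orbT.
move=> /lt_le_trans H; move: (H _ ea) (H _ eb); rewrite !ltr_norml => /andP[? ?] /andP[? ?].
move: (lt_le_trans h1 e1) (lt_le_trans h2 e2); rewrite !ltr_norml => /andP[? ?] /andP[? ?].
split; first by split; lra.
by rewrite /= in_itv /=; apply/andP; split; lra.
Qed.

End s.

Lemma monotone_fix (R : realType) (T : R -> R) (M : R) :
  (forall x y, 0 <= x -> x <= y -> T x <= T y) ->
  (forall x, 0 <= x -> 0 <= T x /\ T x <= M) -> exists x, 0 <= x /\ T x = x.
Proof.
move=> Tm Tb.
pose E := [set x : R | 0 <= x /\ x <= M /\ x <= T x].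
have [T00 T0M] := Tb 0 (lexx 0).
have E0 : E 0 by split => //; split => //; exact: le_trans T0M.
have hE : has_sup E by split; [exists 0|exists M => x [_ []]].
set s := sup E.
have s0 : 0 <= s by exact: (sup_upper_bound hE E0).
have sM : s <= M by apply: ge_sup; [exists 0|move=> x [_ []]].
have sT : s <= T s.
  apply: ge_sup; first by exists 0.
  move=> x [x0 [xM xT]]; have xs := sup_upper_bound hE (conj x0 (conj xM xT)).
  exact: le_trans xT (Tm _ _ x0 xs).
have [Ts0 TsM] := Tb s s0.
have Ts : E (T s) by split => //; split => //; exact: Tm.
exists s; split => //; apply/eqP; rewrite eq_le sT andbT.
exact: (sup_upper_bound hE Ts).
Qed.

Lemma inv_meas (R : realType) : measurable_fun (`]0, +oo[%classic : set R) (@GRing.inv R).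
Proof.
apply: open_continuous_measurable_fun; first exact: rray_open.
move=> x; rewrite inE /= in_itv /= andbT => x0.
by apply: inv_continuous; rewrite gt_eqF.
Qed.

Lemma measurable_funV_pos d (T : measurableType d) (R : realType) (D : set T)
    (g : T -> R) : measurable D -> measurable_fun D g -> (forall t, D t -> 0 < g t) ->
  measurable_fun D (fun t => (g t)^-1).
Proof.
move=> mD mg g0.
change (measurable_fun D (GRing.inv \o g)).
apply: (measurable_comp _ _ (inv_meas R) mg).
- exact: measurable_itv.
- by move=> _ [t Dt <-]; rewrite /= in_itv /= andbT g0.
Qed.

Lemma ln_sub (R : realType) (x y : R) : 0 < x -> 0 < y -> ln x - ln y <= (x - y) / y.
Proof.
move=> x0 y0.
have -> : ln x - ln y = ln (1 + (x - y) / y).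
  have -> : 1 + (x - y) / y = x * y^-1.
    by rewrite mulrBl divff ?gt_eqF // addrC subrK.
  by rewrite lnM ?posrE ?invr_gt0 // lnV ?posrE.
apply: le_ln1Dx.
rewrite mulrBl divff ?gt_eqF //.
have : 0 < x / y by rewrite divr_gt0.
lra.
Qed.
Arguments ln_sub {R x y}.

Section Main.
Variable R : realType.
Local Notation Q := (quadrant R).
Local Notation mu := (leb2 R).
Variable f : R * R -> R.
Hypothesis hf0 : forall h, Q h -> 0 <= f h.
Hypothesis hf1 : (\int[mu]_(h in Q) (f h)%:E = 1)%E.
Hypothesis mf : measurable_fun Q f.
Implicit Types (n : R * R -> R) (l Pb : R).

Lemma mQ : measurable Q.
Proof.
have -> : Q = `]0, +oo[%classic `*` `]0, +oo[%classic.
  by apply/seteqP; split => h; rewrite /quadrant /setX /= !in_itv /= !andbT.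
by apply: measurableX; exact: measurable_itv.
Qed.

Lemma ge0E (x : R) : 0 <= x -> (0%R <= x%:E)%E.
Proof. by rewrite lee_fin. Qed.

Lemma fE0 h : Q h -> (0 <= (f h)%:E)%E.
Proof. by move=> qh; rewrite lee_fin hf0. Qed.

Definition W (l m : R) : R := Num.max 0 (l - m).

Lemma WE l (m : R) : W l m = if m <= l then l - m else 0.
Proof. by rewrite /W maxEle subr_ge0; case: ifP. Qed.

Lemma W_ge0 l (m : R) : 0 <= W l m.
Proof. by rewrite WE; case: ifPn => // ?; rewrite subr_ge0. Qed.

Lemma mW (n : R * R -> R) l : measurable_fun Q n ->
  measurable_fun Q (fun h => W l (n h)).
Proof.
move=> mn; apply: measurable_maxr; first exact: measurable_cst.
by apply: measurable_funB => //; exact: measurable_cst.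
Qed.

Lemma mEf (g : R * R -> R) : measurable_fun Q g ->
  measurable_fun Q (fun h => (g h * f h)%:E).
Proof. by move=> mg; apply/measurable_EFinP; exact: measurable_funM. Qed.

Definition B (n : R * R -> R) (l : R) : \bar R :=
  (\int[mu]_(h in Q) (W l (n h) * f h)%:E)%E.

Lemma B_ge0 n l : (0 <= B n l)%E.
Proof. by apply: integral_ge0 => h qh; rewrite lee_fin mulr_ge0 // ?W_ge0 ?hf0. Qed.

Lemma B_mono_l n l l' : measurable_fun Q n -> l <= l' -> (B n l <= B n l')%E.
Proof.
move=> mn ll; apply: ge0_le_integral => //.
- exact mQ.
- by move=> h qh; rewrite lee_fin mulr_ge0 // ?W_ge0 ?hf0.
- exact (mEf _ (mW _ _ mn)).
- exact (mEf _ (mW _ _ mn)).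
move=> h qh; rewrite lee_fin ler_wpM2r ?hf0 // !WE.
by case: ifPn; case: ifPn => //; rewrite -?ltNge => *; lra.
Qed.

Lemma B_mono_n (n n' : R * R -> R) l : measurable_fun Q n -> measurable_fun Q n' ->
  (forall h, Q h -> n h <= n' h) -> (B n' l <= B n l)%E.
Proof.
move=> mn mn' nn; apply: ge0_le_integral => //.
- exact mQ.
- by move=> h qh; rewrite lee_fin mulr_ge0 // ?W_ge0 ?hf0.
- exact (mEf _ (mW _ _ mn')).
- exact (mEf _ (mW _ _ mn)).
move=> h qh; rewrite lee_fin ler_wpM2r ?hf0 // !WE; have := nn h qh.
by case: ifPn; case: ifPn => //; rewrite -?ltNge => *; lra.
Qed.

Lemma B0 n : (forall h, Q h -> 0 <= n h) -> B n 0 = 0%E.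
Proof.
move=> n0; rewrite /B (eq_integral (fun _ => 0%E)); first exact: integral0.
move=> h /[!inE] qh; rewrite WE; have := n0 h qh.
case: ifPn => [nh0 nh1|]; last by rewrite mul0r.
have -> : n h = 0 by apply/eqP; rewrite eq_le nh0 nh1.
by rewrite subrr mul0r.
Qed.

Arguments B0 {n}.

Lemma B_lip n l l' : measurable_fun Q n -> l <= l' ->
  (B n l' <= B n l + (l' - l)%:E)%E.
Proof.
move=> mn ll.
have mc : measurable_fun Q (fun h => ((l' - l) * f h)%:E).
  exact (mEf _ (measurable_cst (l' - l))).
have -> : (l' - l)%:E = (\int[mu]_(h in Q) ((l' - l) * f h)%:E)%E.
  under eq_integral do rewrite EFinM.
  rewrite ge0_integralZl_EFin.
  - by rewrite hf1 mule1.
  - exact mQ.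
  - by move=> h qh; apply: fE0.
  - exact (proj2 (measurable_EFinP _ _) mf).
  - by rewrite subr_ge0.
rewrite /B -ge0_integralD.
- apply: ge0_le_integral.
  + exact mQ.
  + by move=> h qh; rewrite lee_fin mulr_ge0 // ?W_ge0 ?hf0.
  + exact (mEf _ (mW _ _ mn)).
  + by apply: emeasurable_funD; [exact (mEf _ (mW _ _ mn))|exact mc].
  move=> h qh; rewrite -EFinD lee_fin -mulrDl ler_wpM2r ?hf0 // !WE.
  by case: ifPn; case: ifPn => //; rewrite -?ltNge => *; lra.
- exact mQ.
- by move=> h qh; rewrite lee_fin mulr_ge0 // ?W_ge0 ?hf0.
- exact (mEf _ (mW _ _ mn)).
- by move=> h qh; rewrite lee_fin mulr_ge0 ?subr_ge0 ?hf0.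
- exact mc.
Qed.

Arguments B_lip {n l l'}.
Arguments B_mono_l {n l l'}.
Arguments B_mono_n {n n' l}.

Definition S (Pb : R) (n : R * R -> R) : set R :=
  [set l | 0 <= l /\ (Pb%:E <= B n l)%E].
Definition lev Pb n := inf (S Pb n).

Lemma S_lb Pb n : has_lbound (S Pb n).
Proof. by exists 0 => l [] . Qed.

Lemma lev_le Pb n l : 0 <= l -> (Pb%:E <= B n l)%E -> lev Pb n <= l.
Proof. by move=> l0 Bl; apply: (ge_inf (S_lb Pb n)). Qed.

Lemma lev_ge0 Pb n : S Pb n !=set0 -> 0 <= lev Pb n.
Proof. by move=> ne; apply: lb_le_inf => // l []. Qed.

Lemma B_fin n l : measurable_fun Q n -> (forall h, Q h -> 0 <= n h) -> 0 <= l ->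
  exists r, B n l = r%:E /\ 0 <= r <= l.
Proof.
move=> mn n0 l0; have := B_lip mn l0; rewrite B0 // add0e subr0.
have := B_ge0 n l; case: (B n l) => [r||] //=; rewrite !lee_fin => r0 rl.
by exists r; rewrite r0 rl.
Qed.

Arguments B_fin {n l}.

Lemma lev_spec Pb n : 0 < Pb -> measurable_fun Q n ->
  (forall h, Q h -> 0 <= n h) -> S Pb n !=set0 ->
  B n (lev Pb n) = Pb%:E /\ 0 < lev Pb n.
Proof.
move=> Pb0 mn n0 ne; set L := lev Pb n.
have L0 : 0 <= L by apply: lev_ge0.
have [r [BL /andP[r0 rL]]] := B_fin mn n0 L0.
have Lpos : r = Pb -> 0 < L.
  move=> rP; rewrite lt_neqAle L0 andbT; apply/negP => /eqP L0'.
  by move: BL; rewrite -L0' (B0 n0) rP => -[] P0; move: Pb0; rewrite -P0 ltxx.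
suff rP : r = Pb by rewrite BL rP; split => //; exact: Lpos.
have [rlt|rgt|//] := ltgtP r Pb.
- have LB : lbound (S Pb n) (L + (Pb - r)).
    move=> l [l0 Pl]; have Ll : L <= l by apply: lev_le.
    rewrite leNgt; apply/negP => lt.
    have := B_lip mn Ll; rewrite BL -EFinD => Bl.
    have := le_trans Pl Bl; rewrite lee_fin; lra.
  have := lb_le_inf ne LB; rewrite -/(lev Pb n) -/L; lra.
- have Lp : 0 < L by rewrite lt_neqAle L0 andbT; apply/negP => /eqP L0';
    move: BL; rewrite -L0' (B0 n0) => -[] r0'; lra.
  pose e := Num.min L ((r - Pb) / 2).
  have e0 : 0 < e by rewrite lt_min Lp /=; lra.
  have eL : e <= L by rewrite ge_min lexx.
  have er : e <= (r - Pb) / 2 by rewrite ge_min lexx orbT.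
  have l0 : 0 <= L - e by lra.
  have le : L - e <= L by lra.
  have := B_lip mn le; rewrite BL.
  have [r' [Br' _]] := B_fin mn n0 l0.
  rewrite Br' -EFinD lee_fin => h.
  have : L <= L - e.
    apply: lev_le => //; rewrite Br' lee_fin; lra.
  lra.
Qed.

Lemma lev_mono Pb n n' : measurable_fun Q n -> measurable_fun Q n' ->
  (forall h, Q h -> n h <= n' h) -> S Pb n' !=set0 -> lev Pb n <= lev Pb n'.
Proof.
move=> mn mn' nn ne; apply: lb_le_inf => // l [l0 Pl]; apply: lev_le => //.
exact: le_trans Pl (B_mono_n mn mn' nn).
Qed.

Lemma exist_lev Pb n (A : set (R * R)) : 0 <= Pb -> measurable A ->
  measurable_fun Q n -> (forall h, Q h -> 0 <= n h) ->
  (0 < \int[mu]_(h in Q `&` A) (f h)%:E)%E ->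
  exists l, 0 <= l /\ (Pb%:E <= \int[mu]_(h in Q `&` A) (W l (n h) * f h)%:E)%E.
Proof.
move=> Pb0 mA mn n0 IA.
pose F (k : nat) := (Q `&` n @^-1` `]-oo, k%:R]) `&` A.
have mF k : measurable (F k).
  apply: measurableI => //; apply: mn; [exact mQ|exact: measurable_itv].
have FQ k : F k `<=` Q by move=> h [[]].
have FQA k : F k `<=` Q `&` A by move=> h [[? _] ?].
have mfE : measurable_fun Q (fun h => (f h)%:E) := proj2 (measurable_EFinP _ _) mf.
have [k Ik] : exists k, (0 < \int[mu]_(h in F k) (f h)%:E)%E.
  apply/not_existsP => Hk.
  have Hk0 k : (\int[mu]_(h in F k) (f h)%:E)%E = 0%E.
    apply/eqP; rewrite eq_le integral_ge0 ?andbT; last by move=> h /FQ; apply: fE0.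
    by rewrite leNgt; apply/negP; exact: Hk.
  have UF : \bigcup_i F i = Q `&` A.
    apply/seteqP; split; first by move=> h [i _ /FQA].
    move=> h [qh ah]; exists (Num.trunc `|n h|).+1 => //; split => //; split => //.
    rewrite /= in_itv /=; apply: ltW; apply: le_lt_trans (truncnS_gt _).
    exact: ler_norm.
  have H : (\int[mu]_(x in F i) (f x)%:E)%E @[i --> \oo] -->
           (\int[mu]_(x in \bigcup_i F i) (f x)%:E)%E.
    apply: ge0_nondecreasing_set_cvg_integral.
    - move=> a b ab; apply/subsetPset => h [[qh /= nh] ah]; split => //; split => //.
      move: nh; rewrite /= !in_itv /= => nh; apply: le_trans nh _; rewrite ler_nat.
      exact: ab.
    - by move=> i; exact (mF i).
    - by move=> i; apply: measurable_funS (mfE) => //; exact mQ.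
    - by move=> i h /FQ; apply: fE0.
  rewrite UF in H.
  have E0 : (fun i => \int[mu]_(x in F i) (f x)%:E)%E = (fun=> 0%E).
    by apply/funext => i; apply: Hk0.
  rewrite E0 in H.
  have : (\int[mu]_(h in Q `&` A) (f h)%:E)%E = 0%E.
    exact: (cvg_unique (@ereal_hausdorff R) H (cvg_cst 0%E)).
  by move=> E; move: IA; rewrite E ltxx.
have := @ge0_subset_integral _ _ _ mu (F k) Q (mF k) mQ (fun h => (f h)%:E) mfE fE0 (FQ k).
rewrite hf1.
move: Ik; case E : (\int[mu]_(h in F k) (f h)%:E)%E => [c||] //; rewrite ?lte_fin => c0 c1.
exists (k%:R + Pb / c); split.
  by apply: addr_ge0 => //; apply: divr_ge0 => //; exact: ltW.
have -> : Pb%:E = ((Pb / c)%:E * \int[mu]_(h in F k) (f h)%:E)%E.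
  by rewrite E -EFinM divfK ?gt_eqF.
rewrite -ge0_integralZl_EFin; [|exact (mF k)|by move=> h /FQ; apply: fE0|by apply: measurable_funS mfE => //; exact mQ|by apply: divr_ge0 => //; exact: ltW].
have S1 : (\int[mu]_(h in F k) (W (k%:R + Pb / c) (n h) * f h)%:E <=
    \int[mu]_(h in Q `&` A) (W (k%:R + Pb / c) (n h) * f h)%:E)%E.
  apply: ge0_subset_integral.
  - exact (mF k).
  - exact: measurableI mQ mA.
  - by apply: measurable_funS (mEf _ (mW _ _ mn)); [exact mQ|move=> h []].
  - by move=> h [qh _]; apply: ge0E; rewrite mulr_ge0 ?hf0 ?W_ge0.
  - exact: FQA.
apply: le_trans S1.
apply: ge0_le_integral => //.
- exact (mF k).
- by move=> h /FQ qh; rewrite -EFinM lee_fin mulr_ge0 ?hf0 // divr_ge0 // ltW.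
- apply: emeasurable_funM; first exact: measurable_cst.
  by apply: measurable_funS mfE => //; exact mQ.
- by apply: measurable_funS (mEf _ (mW _ _ mn)) => //; exact mQ.
move=> h [[qh /=]] /[!in_itv] /= nk _.
rewrite -EFinM lee_fin ler_wpM2r ?hf0 // WE; case: ifPn => [_|]; first by lra.
rewrite -ltNge => lt; have : 0 <= Pb / c by apply: divr_ge0 => //; exact: ltW.
move: (n0 h qh) (ler_nat R 0 k); lra.
Qed.

Lemma br_pt (n lam p : R) : 0 < n -> 0 < lam -> 0 <= p ->
  ln (1 + p / n) - ln (1 + W lam n / n) <= (p - W lam n) / lam.
Proof.
move=> n0 l0 p0.
have y0 : 0 < 1 + W lam n / n by rewrite ltr_pwDl // divr_ge0 ?W_ge0 // ltW.
have x0 : 0 < 1 + p / n by rewrite ltr_pwDl // divr_ge0 // ltW.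
apply: le_trans (ln_sub x0 y0) _.
rewrite WE; case: ifPn => [nl|].
- rewrite le_eqVlt; apply/orP; left; apply/eqP; field.
  by rewrite !gt_eqF.
- move=> /negP nl; have ln : lam < n by rewrite ltNge; apply/negP.
  rewrite mul0r addr0 divr1 subr0 addrC addKr.
  by apply: ler_wpM2l => //; rewrite lef_pV2 ?posrE // ltW.
Qed.

Definition u (sigma : R) (a J p : R * R -> R) (h : R * R) : R :=
  (2^-1 * log2 (1 + p h * a h / (sigma + J h))) * f h.

Lemma mu_meas sigma (a J p : R * R -> R) : 0 < sigma ->
  measurable_fun Q a -> measurable_fun Q J -> (forall h, Q h -> 0 <= J h) ->
  measurable_fun Q p -> measurable_fun Q (u sigma a J p).
Proof.
move=> s0 ma mJ J0 mp; rewrite /u /log2.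
apply: measurable_funM => //; apply: measurable_funM; first exact: measurable_cst.
apply: measurable_funM; last exact: measurable_cst.
apply: measurableT_comp; first exact: measurable_ln.
apply: measurable_funD; first exact: measurable_cst.
apply: measurable_funM; first exact: measurable_funM.
apply: measurable_funV_pos; first exact mQ.
  by apply: measurable_funD => //; exact: measurable_cst.
by move=> h qh; apply: ltr_pwDl; [exact: s0 | exact: J0].
Qed.

Lemma u_ge0 sigma (a J p : R * R -> R) h : 0 < sigma -> Q h -> 0 < a h -> 0 <= J h ->
  0 <= p h -> 0 <= u sigma a J p h.
Proof.
move=> s0 qh a0 J0 p0; rewrite /u /log2; apply: mulr_ge0; last exact: hf0.
apply: mulr_ge0 => //; apply: divr_ge0; last by apply: ltW; apply: ln_gt0; lra.
apply: ln_ge0; rewrite lerDl; apply: divr_ge0; first exact: mulr_ge0 (ltW a0).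
by apply: addr_ge0 => //; exact: ltW.
Qed.

Lemma best_response (a J P : R * R -> R) (sigma lam Pb : R) :
  0 < sigma -> 0 < lam -> measurable_fun Q a -> measurable_fun Q J ->
  (forall h, Q h -> 0 < a h) -> (forall h, Q h -> 0 <= J h) ->
  measurable_fun Q P ->
  (forall h, Q h -> P h = W lam ((sigma + J h) / a h)) ->
  expect f P = Pb%:E ->
  forall P', feasible f Pb P' ->
  (\int[mu]_(h in Q) (u sigma a J P' h)%:E <= \int[mu]_(h in Q) (u sigma a J P h)%:E)%E.
Proof.
move=> s0 l0 ma mJ a0 J0 mP PE EP P' [mP' P'0 EP'].
have ln20 : 0 < ln (2 : R) by apply: ln_gt0; lra.
pose c : R := 2^-1 / ln 2.
have c0 : 0 < c by apply: divr_gt0 => //; rewrite invr_gt0; lra.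
pose k : R := c / lam.
have k0 : 0 <= k by apply: divr_ge0; exact: ltW.
have P0 h : Q h -> 0 <= P h by move=> qh; rewrite PE // W_ge0.
have pt h : Q h -> u sigma a J P' h + k * (P h * f h) <= u sigma a J P h + k * (P' h * f h).
  move=> qh; have a0h := a0 h qh; have J0h := J0 h qh.
  have d0 : 0 < sigma + J h by apply: ltr_pwDl.
  pose n := (sigma + J h) / a h.
  have n0 : 0 < n by apply: divr_gt0.
  have E1 (p : R) : p * a h / (sigma + J h) = p / n.
    by rewrite /n invf_div mulrA.
  have br := @br_pt n lam (P' h) n0 l0 (P'0 h qh).
  rewrite /u /log2 !E1 PE //.
  rewrite -/n.
  have cf : 0 <= c * f h by apply: mulr_ge0; [exact: ltW|exact: hf0].
  have := ler_wpM2l cf br.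
  rewrite /k.
  set L1 := ln (1 + P' h / n); set L2 := ln (1 + W lam n / n).
  move=> H.
  have -> : 2^-1 * (L1 / ln 2) * f h = c * f h * L1 by rewrite /c; field; rewrite gt_eqF.
  have -> : 2^-1 * (L2 / ln 2) * f h = c * f h * L2 by rewrite /c; field; rewrite gt_eqF.
  have -> : c / lam * (W lam n * f h) = c * f h * (W lam n / lam) by field; rewrite gt_eqF.
  have -> : c / lam * (P' h * f h) = c * f h * (P' h / lam) by field; rewrite gt_eqF.
  move: H; rewrite mulrBr mulrBl mulrBr; lra.
have muP' := @mu_meas sigma a J P' s0 ma mJ J0 mP'.
have muP := @mu_meas sigma a J P s0 ma mJ J0 mP.
have mPf : measurable_fun Q (fun h => (P h * f h)%:E) := mEf _ mP.
have mP'f : measurable_fun Q (fun h => (P' h * f h)%:E) := mEf _ mP'.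
have Pf0 h : Q h -> (0%R <= (P h * f h)%:E)%E by move=> qh; apply: ge0E; rewrite mulr_ge0 ?P0 ?hf0.
have P'f0 h : Q h -> (0%R <= (P' h * f h)%:E)%E by move=> qh; apply: ge0E; rewrite mulr_ge0 ?P'0 ?hf0.
have uP'0 h : Q h -> (0%R <= (u sigma a J P' h)%:E)%E.
  by move=> qh; apply: ge0E; apply: u_ge0 => //; [exact: a0|exact: J0|exact: P'0].
have uP0 h : Q h -> (0%R <= (u sigma a J P h)%:E)%E.
  by move=> qh; apply: ge0E; apply: u_ge0 => //; [exact: a0|exact: J0|exact: P0].
have kPf0 (g : R * R -> R) h : Q h -> (0%R <= (g h * f h)%:E)%E -> (0%R <= (k%:E * (g h * f h)%:E))%E.
  by move=> qh gf; apply: mule_ge0 => //; rewrite lee_fin.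
have ZP : (\int[mu]_(h in Q) (k%:E * (P h * f h)%:E))%E = (k%:E * Pb%:E)%E.
  by rewrite ge0_integralZl_EFin //; [rewrite -EP|exact mQ].
have ZP' : (\int[mu]_(h in Q) (k%:E * (P' h * f h)%:E))%E = (k%:E * expect f P')%E.
  by rewrite ge0_integralZl_EFin //; exact mQ.
have I1 : (\int[mu]_(h in Q) ((u sigma a J P' h)%:E + k%:E * (P h * f h)%:E))%E =
    (\int[mu]_(h in Q) (u sigma a J P' h)%:E + k%:E * Pb%:E)%E.
  rewrite ge0_integralD //; first by rewrite ZP.
  - exact mQ.
  - exact/measurable_EFinP.
  - by move=> h qh; apply: kPf0 => //; exact: Pf0.
  - by apply: emeasurable_funM => //; exact: measurable_cst.
have I2 : (\int[mu]_(h in Q) ((u sigma a J P h)%:E + k%:E * (P' h * f h)%:E))%E =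
    (\int[mu]_(h in Q) (u sigma a J P h)%:E + k%:E * expect f P')%E.
  rewrite ge0_integralD //; first by rewrite ZP'.
  - exact mQ.
  - exact/measurable_EFinP.
  - by move=> h qh; apply: kPf0 => //; exact: P'f0.
  - by apply: emeasurable_funM => //; exact: measurable_cst.
have LE : (\int[mu]_(h in Q) ((u sigma a J P' h)%:E + k%:E * (P h * f h)%:E) <=
    \int[mu]_(h in Q) ((u sigma a J P h)%:E + k%:E * (P' h * f h)%:E))%E.
  apply: ge0_le_integral.
  - exact mQ.
  - by move=> h qh; apply: adde_ge0; [exact: uP'0|apply: kPf0 => //; exact: Pf0].
  - apply: emeasurable_funD; first exact/measurable_EFinP.
    by apply: emeasurable_funM => //; exact: measurable_cst.
  - apply: emeasurable_funD; first exact/measurable_EFinP.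
    by apply: emeasurable_funM => //; exact: measurable_cst.
  - by move=> h qh; rewrite -!EFinM -!EFinD lee_fin; exact: pt.
rewrite I1 I2 in LE.
have LE2 := le_trans LE (leeD2l _ (lee_wpmul2l (ge0E k k0) EP')).
by move: LE2; rewrite leeD2rE // -EFinM.
Qed.

Lemma S_ne Pb n : 0 <= Pb -> measurable_fun Q n -> (forall h, Q h -> 0 <= n h) ->
  S Pb n !=set0.
Proof.
move=> Pb0 mn n0.
have [l [l0 Hl]] := @exist_lev Pb n setT Pb0 measurableT mn n0 ltac:(by rewrite setIT hf1 lte_fin).
by exists l; split => //; move: Hl; rewrite setIT.
Qed.

Lemma mfst : measurable_fun Q (@fst R R).
Proof. by apply: measurable_funS (@measurable_fst _ _ R R) => //; exact mQ. Qed.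
Lemma msnd : measurable_fun Q (@snd R R).
Proof. by apply: measurable_funS (@measurable_snd _ _ R R) => //; exact mQ. Qed.

Section Game.
Variables (sigma Pbar1 Pbar2 : R) (D1 : set (R * R)).
Hypotheses (s0 : 0 < sigma) (P10 : 0 < Pbar1) (P20 : 0 < Pbar2) (mD1 : measurable D1).

Definition Q1 x (h : R * R) := W x (sigma / h.1).
Definition Q2 y (h : R * R) := W y (sigma / h.2).
Definition n1 y h := (sigma + Q2 y h * h.2 * \1_D1 h) / h.1.
Definition n2 x h := (sigma + Q1 x h * h.1 * \1_(~` D1) h) / h.2.
Definition l1 y := lev Pbar1 (n1 y).
Definition l2 x := lev Pbar2 (n2 x).

Lemma ind_ge0 (A : set (R * R)) h : 0 <= \1_A h :> R.
Proof. by rewrite indicE; case: (_ \in _). Qed.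

Lemma mQ1 x : measurable_fun Q (Q1 x).
Proof.
apply: mW; apply: measurable_funM; first exact: measurable_cst.
by apply: measurable_funV_pos mfst _; [exact mQ|move=> h []].
Qed.
Lemma mQ2 y : measurable_fun Q (Q2 y).
Proof.
apply: mW; apply: measurable_funM; first exact: measurable_cst.
by apply: measurable_funV_pos msnd _; [exact mQ|move=> h []].
Qed.

Lemma mn1 y : measurable_fun Q (n1 y).
Proof.
apply: measurable_funM.
  apply: measurable_funD; first exact: measurable_cst.
  apply: measurable_funM; last exact: measurable_indic.
  by apply: measurable_funM; [exact: mQ2|exact: msnd].
by apply: measurable_funV_pos mfst _; [exact mQ|move=> h []].
Qed.
Lemma mn2 x : measurable_fun Q (n2 x).
Proof.
apply: measurable_funM.
  apply: measurable_funD; first exact: measurable_cst.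
  apply: measurable_funM; last by apply: measurable_indic; exact: measurableC.
  by apply: measurable_funM; [exact: mQ1|exact: mfst].
by apply: measurable_funV_pos msnd _; [exact mQ|move=> h []].
Qed.

Lemma n1_pos y h : Q h -> 0 < n1 y h.
Proof.
move=> [h1 h2]; apply: divr_gt0 => //; apply: ltr_pwDl => //.
by apply: mulr_ge0; [apply: mulr_ge0; [exact: W_ge0|exact: ltW]|exact: ind_ge0].
Qed.
Lemma n2_pos x h : Q h -> 0 < n2 x h.
Proof.
move=> [h1 h2]; apply: divr_gt0 => //; apply: ltr_pwDl => //.
by apply: mulr_ge0; [apply: mulr_ge0; [exact: W_ge0|exact: ltW]|exact: ind_ge0].
Qed.

Lemma W_mono l l' m : l <= l' -> W l m <= W l' m.
Proof. by move=> ll; rewrite !WE; case: ifPn; case: ifPn => //; rewrite -?ltNge => *; lra. Qed.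

Lemma n1_mono y y' h : Q h -> y <= y' -> n1 y h <= n1 y' h.
Proof.
move=> [h1 h2] yy; rewrite /n1; apply: ler_wpM2r; first by rewrite invr_ge0 ltW.
rewrite lerD2l; apply: ler_wpM2r; first exact: ind_ge0.
by apply: ler_wpM2r; [exact: ltW|exact: W_mono].
Qed.
Lemma n2_mono x x' h : Q h -> x <= x' -> n2 x h <= n2 x' h.
Proof.
move=> [h1 h2] xx; rewrite /n2; apply: ler_wpM2r; first by rewrite invr_ge0 ltW.
rewrite lerD2l; apply: ler_wpM2r; first exact: ind_ge0.
by apply: ler_wpM2r; [exact: ltW|exact: W_mono].
Qed.

Lemma S1_ne y : S Pbar1 (n1 y) !=set0.
Proof. by apply: S_ne; [exact: ltW|exact: mn1|move=> h qh; exact/ltW/n1_pos]. Qed.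
Lemma S2_ne x : S Pbar2 (n2 x) !=set0.
Proof. by apply: S_ne; [exact: ltW|exact: mn2|move=> h qh; exact/ltW/n2_pos]. Qed.

Lemma l1_mono y y' : y <= y' -> l1 y <= l1 y'.
Proof.
move=> yy; apply: lev_mono; [exact: mn1|exact: mn1| |exact: S1_ne].
by move=> h qh; exact: n1_mono.
Qed.
Lemma l2_mono x x' : x <= x' -> l2 x <= l2 x'.
Proof.
move=> xx; apply: lev_mono; [exact: mn2|exact: mn2| |exact: S2_ne].
by move=> h qh; exact: n2_mono.
Qed.

Arguments l1_mono {y y'}.
Arguments l2_mono {x x'}.

Lemma l1_ge0 y : 0 <= l1 y. Proof. exact/lev_ge0/S1_ne. Qed.
Lemma l2_ge0 x : 0 <= l2 x. Proof. exact/lev_ge0/S2_ne. Qed.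

Lemma msig2 : measurable_fun Q (fun h : R * R => sigma / h.2).
Proof.
apply: measurable_funM; first exact: measurable_cst.
by apply: measurable_funV_pos msnd _; [exact mQ|move=> h []].
Qed.
Lemma msig1 : measurable_fun Q (fun h : R * R => sigma / h.1).
Proof.
apply: measurable_funM; first exact: measurable_cst.
by apply: measurable_funV_pos mfst _; [exact mQ|move=> h []].
Qed.

Lemma WfE_ge0 l n h : Q h -> (0%R <= (W l (n h) * f h)%:E)%E.
Proof. by move=> qh; apply: ge0E; rewrite mulr_ge0 ?W_ge0 ?hf0. Qed.

Lemma bound2 : (0 < \int[mu]_(h in Q `&` D1) (f h)%:E)%E ->
  exists M, forall x, l2 x <= M.
Proof.
move=> pos.
have [M [M0 HM]] := @exist_lev Pbar2 (fun h => sigma / h.2) D1 (ltW P20) mD1 msig2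
  ltac:(by move=> h [h1 h2]; rewrite divr_ge0 // ltW) pos.
exists M => x; apply: lev_le => //; apply: le_trans HM _.
have -> : (\int[mu]_(h in Q `&` D1) (W M (sigma / h.2) * f h)%:E)%E =
          (\int[mu]_(h in Q `&` D1) (W M (n2 x h) * f h)%:E)%E.
  apply: eq_integral => h /[!inE] -[qh hD].
  by rewrite /n2 indicE in_setC (mem_set hD) /= mulr0 addr0.
apply: ge0_subset_integral.
- exact: measurableI mQ mD1.
- exact mQ.
- exact (mEf _ (mW _ _ (mn2 x))).
- by move=> h qh; apply: WfE_ge0.
- by move=> h [].
Qed.

Lemma bound1 : (0 < \int[mu]_(h in Q `&` ~` D1) (f h)%:E)%E ->
  exists M, forall y, l1 y <= M.
Proof.
move=> pos.
have [M [M0 HM]] := @exist_lev Pbar1 (fun h => sigma / h.1) (~` D1) (ltW P10)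
  (measurableC mD1) msig1 ltac:(by move=> h [h1 h2]; rewrite divr_ge0 // ltW) pos.
exists M => y; apply: lev_le => //; apply: le_trans HM _.
have -> : (\int[mu]_(h in Q `&` ~` D1) (W M (sigma / h.1) * f h)%:E)%E =
          (\int[mu]_(h in Q `&` ~` D1) (W M (n1 y h) * f h)%:E)%E.
  apply: eq_integral => h /[!inE] -[qh hD].
  by rewrite /n1 indicE (memNset hD) /= mulr0 addr0.
apply: ge0_subset_integral.
- exact: measurableI mQ (measurableC mD1).
- exact mQ.
- exact (mEf _ (mW _ _ (mn1 y))).
- by move=> h qh; apply: WfE_ge0.
- by move=> h [].
Qed.

Lemma split_mass : (0 < \int[mu]_(h in Q `&` D1) (f h)%:E)%E \/
                   (0 < \int[mu]_(h in Q `&` ~` D1) (f h)%:E)%E.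
Proof.
have mfE : measurable_fun Q (fun h => (f h)%:E) := proj2 (measurable_EFinP _ _) mf.
have E : (\int[mu]_(h in Q) (f h)%:E)%E =
    (\int[mu]_(h in Q `&` D1) (f h)%:E + \int[mu]_(h in Q `&` ~` D1) (f h)%:E)%E.
  rewrite -ge0_integral_setU.
  - by rewrite -setIUr setUCr setIT.
  - exact: measurableI mQ mD1.
  - exact: measurableI mQ (measurableC mD1).
  - by rewrite -setIUr setUCr setIT.
  - by rewrite -setIUr setUCr setIT => h qh; apply: fE0.
  - by apply/disj_setPS => h [[_ ?] [_ ?]].
have g1 := @integral_ge0 _ _ _ mu (Q `&` D1) (fun h => (f h)%:E) ltac:(by move=> h [qh _]; apply: fE0).
have g2 := @integral_ge0 _ _ _ mu (Q `&` ~` D1) (fun h => (f h)%:E) ltac:(by move=> h [qh _]; apply: fE0).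
rewrite !lt_neqAle g1 g2 !andbT.
have [e1|] := eqVneq 0%E (\int[mu]_(h in Q `&` D1) (f h)%:E)%E; last by left.
have [e2|] := eqVneq 0%E (\int[mu]_(h in Q `&` ~` D1) (f h)%:E)%E; last by right.
by move: E; rewrite hf1 -e1 -e2 adde0 => -[] /eqP; rewrite oner_eq0.
Qed.

Lemma fixed_levels : exists x y, l1 y = x /\ l2 x = y.
Proof.
case: split_mass => [/bound2 [M HM]|/bound1 [M HM]].
- have [y [y0 Ty]] := @monotone_fix R (fun y => l2 (l1 y)) M
    (fun a b _ ab => l2_mono (l1_mono ab)) (fun a _ => conj (l2_ge0 _) (HM _)).
  by exists (l1 y), y.
- have [x [x0 Tx]] := @monotone_fix R (fun x => l1 (l2 x)) M
    (fun a b _ ab => l1_mono (l2_mono ab)) (fun a _ => conj (l1_ge0 _) (HM _)).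
  by exists x, (l2 x).
Qed.

Lemma game_nash : exists P1 P2, nash_equilibrium f sigma Pbar1 Pbar2 D1 P1 P2.
Proof.
have [x [y [ex ey]]] := fixed_levels.
have [B1 x0] : B (n1 y) x = Pbar1%:E /\ 0 < x.
  rewrite -ex; apply: lev_spec => //; [exact: mn1|move=> h qh; exact/ltW/n1_pos|exact: S1_ne].
have [B2 y0] : B (n2 x) y = Pbar2%:E /\ 0 < y.
  rewrite -ey; apply: lev_spec => //; [exact: mn2|move=> h qh; exact/ltW/n2_pos|exact: S2_ne].
pose P1 := fun h => W x (n1 y h).
pose P2 := fun h => W y (n2 x h).
have mP1 : measurable_fun Q P1 := mW _ _ (mn1 y).
have mP2 : measurable_fun Q P2 := mW _ _ (mn2 x).
have J1E h : Q h -> P1 h = W x ((sigma + P2 h * h.2 * \1_D1 h) / h.1).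
  move=> qh; rewrite /P1 /n1; congr (W x ((sigma + _) / _)).
  rewrite !indicE; have [hD|hD] := boolP (h \in D1); last by rewrite !mulr0.
  by rewrite /P2 /n2 indicE in_setC hD /= mulr0 addr0.
have J2E h : Q h -> P2 h = W y ((sigma + P1 h * h.1 * \1_(~` D1) h) / h.2).
  move=> qh; rewrite /P2 /n2; congr (W y ((sigma + _) / _)).
  rewrite !indicE !in_setC; have [hD|hD] := boolP (h \in D1); first by rewrite /= !mulr0.
  by rewrite /P1 /n1 indicE (negbTE hD) /= mulr0 addr0.
have mJ1 : measurable_fun Q (fun h => P2 h * h.2 * \1_D1 h).
  apply: measurable_funM; last exact: measurable_indic.
  by apply: measurable_funM; [exact: mP2|exact: msnd].
have mJ2 : measurable_fun Q (fun h => P1 h * h.1 * \1_(~` D1) h).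
  apply: measurable_funM; last by apply: measurable_indic; exact: measurableC.
  by apply: measurable_funM; [exact: mP1|exact: mfst].
have J10 h : Q h -> 0 <= P2 h * h.2 * \1_D1 h.
  by move=> [h1 h2]; rewrite mulr_ge0 ?ind_ge0 // mulr_ge0 ?W_ge0 // ltW.
have J20 h : Q h -> 0 <= P1 h * h.1 * \1_(~` D1) h.
  by move=> [h1 h2]; rewrite mulr_ge0 ?ind_ge0 // mulr_ge0 ?W_ge0 // ltW.
exists P1, P2; split.
- by split => // [h _|]; [exact: W_ge0|rewrite /expect -/(B (n1 y) x) B1].
- by split => // [h _|]; [exact: W_ge0|rewrite /expect -/(B (n2 x) y) B2].
- move=> P1' fP1'.
  exact: (@best_response (@fst R R) (fun h => P2 h * h.2 * \1_D1 h) P1 sigma x Pbar1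
    s0 x0 mfst mJ1 (fun h qh => proj1 qh) J10 mP1 J1E B1 P1' fP1').
- move=> P2' fP2'.
  exact: (@best_response (@snd R R) (fun h => P1 h * h.1 * \1_(~` D1) h) P2 sigma y Pbar2
    s0 y0 msnd mJ2 (fun h qh => proj2 qh) J20 mP2 J2E B2 P2' fP2').
Qed.

End Game.
End Main.

Theorem theorem2 (R : realType) (f : R * R -> R) (sigma2 Pbar1 Pbar2 : R)
    (D1 : set (R * R)) :
  0 < sigma2 -> 0 < Pbar1 -> 0 < Pbar2 ->
  fading_density f ->
  measurable D1 -> D1 `<=` quadrant R ->
  exists P1 P2 : R * R -> R, nash_equilibrium f sigma2 Pbar1 Pbar2 D1 P1 P2.
Proof.
move=> s0 p10 p20 [hf0 hf1 hc _] mD1 _.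
apply: (@game_nash R f hf0 hf1 _ sigma2 Pbar1 Pbar2 D1 s0 p10 p20 mD1) => //; exact: cont_meas.
Qed.
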